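(* Let $X$ be a real Hilbert space, let $U,V$ be closed affine subspaces of $X$, let $T:=T_{U,V}$, $v:=P_{\overline{\operatorname{ran}}(\mathrm{Id}-T)}0$, and assume $v\in\operatorname{ran}(\mathrm{Id}-T)$. Then: (i) $T$ is affine and $T=\mathrm{Id}-P_U-P_V+2P_VP_U$; (ii) $v\in(\operatorname{par}U)^\perp\cap(\operatorname{par}V)^\perp$; (iii) for all $x\in X$, $\alpha\in\mathbb R$: $P_Ux=P_U(x+\alpha v)$; (iv) for all $x\in X$, $\alpha\in\mathbb R$: $P_Vx=P_V(x+\alpha v)$; (v) $T_{-v}=v+T=T_{(N_U,N_V(\cdot-v))}=T_{U,v+V}$; (vi) $Z_v=U\cap(v+V)$; (vii) $K_v=(\operatorname{par}U)^\perp\cap(\operatorname{par}V)^\perp$; (viii) $\operatorname{Fix}(T_{-v})=\operatorname{Fix}(v+T)=Z_v+K_v=(U\cap(v+V))+((\operatorname{par}U)^\perp\cap(\operatorname{par}V)^\perp)$.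
   Context: For nonempty closed convex $U,V$, $T_{U,V}:=\mathrm{Id}-P_U+P_V(2P_U-\mathrm{Id})$ is the Douglas–Rachford operator $T_{(N_U,N_V)}$, where for maximally monotone $A,B$, $T_{(A,B)}:=\mathrm{Id}-J_A+J_B(2J_A-\mathrm{Id})$ with $J_A=(\mathrm{Id}+A)^{-1}$. Here $v=P_{\overline{U-V}}0$. $\operatorname{par}U:=U-U$. $T_{-v}x:=T(x+v)$, $(v+T)x:=v+Tx$. For $C^\vee:=(-\mathrm{Id})\circ C\circ(-\mathrm{Id})$ and $C^{-\vee}:=(C^{-1})^\vee$, with $A=N_U$, $B=N_V$: $Z_v:=((-v+A)+B(\cdot-v))^{-1}(0)$ (normal solutions) and $K_v:=((-v+A)^{-1}+(B(\cdot-v))^{-\vee})^{-1}(0)$ (dual normal solutions). *)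

(* Defs.v *)
From Stdlib Require Import Reals ClassicalEpsilon.
Open Scope R_scope.
Set Implicit Arguments.

Record Hilbert := {
  hcar :> Type;
  hzero : hcar;
  hadd : hcar -> hcar -> hcar;
  hopp : hcar -> hcar;
  hscal : R -> hcar -> hcar;
  hinner : hcar -> hcar -> R;
  hadd_assoc : forall x y z, hadd x (hadd y z) = hadd (hadd x y) z;
  hadd_comm : forall x y, hadd x y = hadd y x;
  hadd_0 : forall x, hadd hzero x = x;
  hadd_opp : forall x, hadd x (hopp x) = hzero;
  hscal_assoc : forall a b x, hscal a (hscal b x) = hscal (a * b) x;
  hscal_1 : forall x, hscal 1 x = x;
  hscal_distr_v : forall a x y, hscal a (hadd x y) = hadd (hscal a x) (hscal a y);
  hscal_distr_s : forall a b x, hscal (a + b) x = hadd (hscal a x) (hscal b x);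
  hinner_sym : forall x y, hinner x y = hinner y x;
  hinner_add_l : forall x y z, hinner (hadd x y) z = hinner x z + hinner y z;
  hinner_scal_l : forall a x y, hinner (hscal a x) y = a * hinner x y;
  hinner_pos : forall x, 0 <= hinner x x;
  hinner_def : forall x, hinner x x = 0 -> x = hzero;
  hcomplete : forall s : nat -> hcar,
    (forall eps, 0 < eps -> exists N, forall m n, (N <= m)%nat -> (N <= n)%nat ->
       sqrt (hinner (hadd (s m) (hopp (s n))) (hadd (s m) (hopp (s n)))) < eps) ->
    exists l, forall eps, 0 < eps -> exists N, forall n, (N <= n)%nat ->
       sqrt (hinner (hadd (s n) (hopp l)) (hadd (s n) (hopp l))) < eps
}.

Arguments hzero {h}.
Arguments hadd {h}.
Arguments hopp {h}.
Arguments hscal {h}.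
Arguments hinner {h}.

Declare Scope hilbert_scope.
Delimit Scope hilbert_scope with H.
Notation "0" := hzero : hilbert_scope.
Notation "x + y" := (hadd x y) : hilbert_scope.
Notation "- x" := (hopp x) : hilbert_scope.
Notation "x - y" := (hadd x (hopp y)) : hilbert_scope.
Notation "a *: x" := (hscal a x) (at level 40, left associativity) : hilbert_scope.
Notation "<< x , y >>" := (hinner x y) (at level 0) : hilbert_scope.

Section Defs.
Context {X : Hilbert}.
Local Open Scope hilbert_scope.

Definition set : Type := X -> Prop.
Definition set_eq (A B : set) : Prop := forall x, A x <-> B x.
Definition fun_eq (f g : X -> X) : Prop := forall x, f x = g x.

Definition hnorm (x : X) : R := sqrt << x , x >>.

Definition closure (C : set) : set :=
  fun x => forall eps, 0%R < eps -> exists c, C c /\ hnorm (x - c) < eps.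
Definition is_closed (C : set) : Prop := forall x, closure C x -> C x.

Definition is_affine_subspace (U : set) : Prop :=
  (exists u, U u) /\
  forall x y (l : R), U x -> U y -> U (l *: x + (1 - l)%R *: y).
Definition closed_affine_subspace (U : set) : Prop :=
  is_affine_subspace U /\ is_closed U.

Definition inter (A B : set) : set := fun x => A x /\ B x.
Definition msum (A B : set) : set := fun x => exists a b, A a /\ B b /\ x = a + b.
Definition translate (w : X) (A : set) : set := fun x => exists a, A a /\ x = w + a.
Definition par (U : set) : set := fun x => exists a b, U a /\ U b /\ x = a - b.
Definition orth (S : set) : set := fun u => forall s, S s -> << u , s >> = 0%R.
Definition ran (f : X -> X) : set := fun y => exists x, f x = y.
Definition Fix (f : X -> X) : set := fun x => f x = x.

Definition affine_map (f : X -> X) : Prop :=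
  forall x y (l : R), f (l *: x + (1 - l)%R *: y) = l *: f x + (1 - l)%R *: f y.

(* metric projection onto C: a nearest point of C to x (unique when C is
   nonempty closed convex), chosen by Hilbert's epsilon *)
Definition proj (C : set) (x : X) : X :=
  epsilon (inhabits 0)
    (fun p => C p /\ forall c, C c -> hnorm (x - p) <= hnorm (x - c)).

Definition DR (U V : set) (x : X) : X :=
  x - proj U x + proj V (2%R *: proj U x - x).

(* set-valued operators: [A x u] means u \in A x *)
Definition op := X -> X -> Prop.
Definition normal_cone (C : set) : op :=
  fun x u => C x /\ forall c, C c -> << u , c - x >> <= 0%R.
Definition op_add (A B : op) : op :=
  fun x u => exists a b, A x a /\ B x b /\ u = a + b.
Definition op_inv (A : op) : op := fun x u => A u x.
Definition op_vee (C : op) : op := fun x u => C (- x) (- u).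
Definition op_translate (w : X) (A : op) : op :=
  fun x u => exists a, A x a /\ u = w + a.
Definition op_shift_arg (B : op) (v : X) : op := fun x u => B (x - v) u.
Definition zeros (C : op) : set := fun x => C x 0.

(* resolvent J_A = (Id + A)^{-1}: the y with x - y \in A y (unique for A
   maximally monotone) *)
Definition resolvent (A : op) (x : X) : X :=
  epsilon (inhabits x) (fun y => A y (x - y)).

Definition DR_op (A B : op) (x : X) : X :=
  x - resolvent A x + resolvent B (2%R *: resolvent A x - x).

Definition Zv (U V : set) (v : X) : set :=
  zeros (op_add (op_translate (- v) (normal_cone U))
                (op_shift_arg (normal_cone V) v)).
Definition Kv (U V : set) (v : X) : set :=
  zeros (op_add (op_inv (op_translate (- v) (normal_cone U)))
                (op_vee (op_inv (op_shift_arg (normal_cone V) v)))).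

End Defs.

(* Main.v *)
Require Import Defs.
From Stdlib Require Import Reals ClassicalEpsilon Lra Psatz Classical.
Local Open Scope hilbert_scope.
Open Scope R_scope.
Arguments hinner {h} _%_H _%_H.
Arguments hscal {h} _%_R _%_H.
Arguments hadd {h} _%_H _%_H.
Arguments hopp {h} _%_H.
Arguments proj {X} _ _%_H.
Arguments hnorm {X} _%_H.
Notation "<< x , y >>" := (hinner x%H y%H) (at level 0) : hilbert_scope.

Section Basics.
Context {X : Hilbert}.
Implicit Types x y z : X.

Lemma hadd_0r x : (x + 0 = x)%H.
Proof. rewrite hadd_comm. apply hadd_0. Qed.

Lemma hadd_cancel_l x (a b : X) : (x + a = x + b)%H -> a = b.
Proof.
  intro H.
  assert (E: forall w, (w = (- x + x) + w)%H).
  { intro w. rewrite hadd_comm with (x := (-x)%H), hadd_opp, hadd_0. reflexivity. }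
  rewrite (E a), (E b), <- !hadd_assoc, H. reflexivity.
Qed.

Lemma scal0 x : hscal 0 x = hzero.
Proof.
  apply (hadd_cancel_l (hscal 0 x)).
  rewrite <- hscal_distr_s, Rplus_0_r, hadd_0r. reflexivity.
Qed.

Lemma opp_scal x : (- x)%H = hscal (-1) x.
Proof.
  apply (hadd_cancel_l x).
  rewrite hadd_opp. rewrite <- (hscal_1 _ x) at 1.
  rewrite <- hscal_distr_s, Rplus_opp_r, scal0. reflexivity.
Qed.

Lemma ip_addr x y z : << x , y + z >> = << x , y >> + << x , z >>.
Proof. rewrite hinner_sym, hinner_add_l, (hinner_sym _ y), (hinner_sym _ z). reflexivity. Qed.

Lemma ip_scalr a x y : << x , hscal a y >> = a * << x , y >>.
Proof. rewrite hinner_sym, hinner_scal_l, hinner_sym. reflexivity. Qed.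

Lemma ip_oppl x y : << - x , y >> = - << x , y >>.
Proof. rewrite opp_scal, hinner_scal_l. ring. Qed.

Lemma ip_oppr x y : << x , - y >> = - << x , y >>.
Proof. rewrite opp_scal, ip_scalr. ring. Qed.

Lemma ip_0l y : << hzero , y >> = 0.
Proof. rewrite <- (scal0 y), hinner_scal_l. ring. Qed.

Lemma ip_0r y : << y , hzero >> = 0.
Proof. rewrite hinner_sym. apply ip_0l. Qed.

Lemma veq_intro x y : << x - y , x - y >> = 0 -> x = y.
Proof.
  intro H. apply hinner_def in H.
  rewrite <- (hadd_0r x), <- (hadd_opp _ y), (hadd_comm _ y), hadd_assoc, H, hadd_0.
  reflexivity.
Qed.

End Basics.

Create HintDb ipdb.
Hint Rewrite @hinner_add_l @ip_addr @hinner_scal_l @ip_scalr @ip_oppl @ip_oppr @ip_0l @ip_0r : ipdb.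

Ltac expand := autorewrite with ipdb.
Ltac veq := apply veq_intro; expand; first [ring | field].
Ltac expand_in H := autorewrite with ipdb in H.


Lemma quad0 (k M : R) : 0 <= M -> (forall t, 0 <= -2*t*k + t*t*M) -> k = 0.
Proof.
  intros HM H.
  set (t := k / (M+1)).
  assert (Ht : t * (M+1) = k) by (unfold t; field; lra).
  specialize (H t).
  rewrite <- Ht in H.
  assert (t * t * (M + 2) <= 0) by nra.
  assert (t = 0) by nra.
  rewrite <- Ht, H1. ring.
Qed.

Lemma le_eps (A B : R) : (forall e, 0 < e -> A <= B + e) -> A <= B.
Proof.
  intro H. destruct (Rle_or_lt A B) as [h|h]; auto.
  specialize (H ((A - B)/2)). lra.
Qed.

Section Geo.
Context {X : Hilbert}.
Implicit Types x y z : X.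

Lemma nonneg x : 0 <= << x , x >>.
Proof. apply hinner_pos. Qed.

Lemma param (t : R) (a b : X) : 0 < t ->
  t * << a + b , a + b >> <= t * (1 + t) * << a , a >> + (1 + t) * << b , b >>.
Proof.
  intro Ht. pose proof (nonneg (t *: a - b)%H) as H0.
  expand. expand_in H0. rewrite (hinner_sym _ b a) in *. nra.
Qed.

Lemma Napprox (A B : R) : 0 <= B ->
  (forall d, 0 < d -> exists a b : X, A <= << a + b , a + b >> /\ << a , a >> <= B + d /\ << b , b >> <= d)
  -> A <= B.
Proof.
  intros HB H. apply le_eps. intros e He.
  set (t := e / (2 * (B + 1) + e)).
  assert (Ht0 : 0 < t) by (unfold t; apply Rdiv_lt_0_compat; lra).
  assert (Ht1 : t * (2 * (B + 1) + e) = e) by (unfold t; field; lra).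
  assert (Ht2 : t <= 1) by nra.
  assert (Ht3 : t * (B + 1) <= e / 2) by nra.
  destruct (H (t * e / 8)) as (a & b & H1 & H2 & H3). { apply Rdiv_lt_0_compat; nra. }
  pose proof (param t a b Ht0) as P.
  assert (t * A <= t * (B + e)).
  { assert (t * A <= t * (1 + t) * (B + t * e / 8) + (1 + t) * (t * e / 8)).
    { apply Rle_trans with (t * << a + b , a + b >>). apply Rmult_le_compat_l; lra.
      apply Rle_trans with (1 := P).
      apply Rplus_le_compat; apply Rmult_le_compat_l; nra. }
    assert (t * (t * B) <= t * (e / 2)) by (apply Rmult_le_compat_l; nra).
    assert ((1 + t) * (1 + t) * (t * e) <= 4 * (t * e)) by (apply Rmult_le_compat_r; nra).
    nra. }
  apply Rmult_le_reg_l with t; lra.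
Qed.

End Geo.

Lemma arch (e : R) : 0 < e -> exists K, forall n, (K <= n)%nat -> / INR (S n) < e.
Proof.
  intro He. destruct (INR_unbounded (/ e)) as [K HK]. exists K. intros n Hn.
  assert (INR K <= INR (S n)) by (apply le_INR; lia).
  assert (0 < / e) by (apply Rinv_0_lt_compat; lra).
  rewrite <- (Rinv_inv e). apply Rinv_lt_contravar.
  - apply Rmult_lt_0_compat. apply Rinv_0_lt_compat; lra. lra.
  - lra.
Qed.

Section Exist.
Context {X : Hilbert}.

Lemma sub_sym (a b : X) : << a - b , a - b >> = << b - a , b - a >>.
Proof. expand. ring. Qed.

Lemma para (a b x : X) : << a - b , a - b >> + 4 * << x - (/2 *: a + (1 - /2) *: b) , x - (/2 *: a + (1 - /2) *: b) >> = 2 * << x - a , x - a >> + 2 * << x - b, x - b >>.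
Proof. expand. field. Qed.

Lemma exist_near (C : @set X) (x : X) : (exists c, C c) ->
  (forall a b, C a -> C b -> C (/2 *: a + (1 - /2) *: b)%H) ->
  exists p, closure C p /\ forall c, C c -> << x - p , x - p >> <= << x - c , x - c >>.
Proof.
  intros [c0 Hc0] Hconv.
  set (E := fun r => exists c, C c /\ r = - << x - c, x - c >>).
  assert (Hb : bound E).
  { exists 0. intros r [c [_ ->]]. pose proof (nonneg (x - c)%H). lra. }
  assert (Hne : exists r, E r) by (exists (- << x - c0, x - c0 >>); exists c0; auto).
  destruct (completeness E Hb Hne) as [m [Hub Hlub]].
  set (d2 := - m).
  assert (Hd0 : 0 <= d2).
  { assert (m <= 0). apply Hlub. intros r [c [_ ->]]. pose proof (nonneg (x - c)%H). lra.
    unfold d2; lra. }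
  assert (Hlb : forall c, C c -> d2 <= << x - c , x - c >>).
  { intros c Hc. assert (- << x - c , x - c >> <= m) by (apply Hub; exists c; auto).
    unfold d2; lra. }
  assert (Happ : forall e, 0 < e -> exists c, C c /\ << x - c , x - c >> < d2 + e).
  { intros e He. apply NNPP; intro Hn.
    assert (is_upper_bound E (m - e)).
    { intros r [c [Hc ->]]. destruct (Rle_or_lt (- << x - c , x - c >>) (m - e)) as [h|h]; auto.
      exfalso; apply Hn; exists c; split; auto; unfold d2; lra. }
    apply Hlub in H; lra. }
  assert (Hs : forall n : nat, exists c, C c /\ << x - c , x - c >> < d2 + / INR (S n)).
  { intro n. apply Happ. apply Rinv_0_lt_compat, lt_0_INR; lia. }
  set (s := fun n => proj1_sig (constructive_indefinite_description _ (Hs n))).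
  assert (Hsn : forall n, C (s n) /\ << x - s n , x - s n >> < d2 + / INR (S n)).
  { intro n. unfold s. apply (proj2_sig (constructive_indefinite_description _ (Hs n))). }
  assert (Hcau : forall eps, 0 < eps -> exists K, forall m n, (K <= m)%nat -> (K <= n)%nat ->
       sqrt (<< s m - s n , s m - s n >>) < eps).
  { intros eps He. destruct (arch (eps * eps / 4)) as [K HK]. nra.
    exists K. intros i j Hi Hj.
    pose proof (para (s i) (s j) x) as P.
    destruct (Hsn i) as [Ci Ni]. destruct (Hsn j) as [Cj Nj].
    pose proof (Hlb _ (Hconv _ _ Ci Cj)) as Hm.
    pose proof (HK i Hi). pose proof (HK j Hj).
    rewrite <- (sqrt_square eps) by lra.
    apply sqrt_lt_1_alt. split. apply nonneg. lra. }
  destruct (hcomplete X s Hcau) as [l Hl].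
  exists l. split.
  - intros eps Heps. destruct (Hl eps Heps) as [K HK]. exists (s K). split. apply Hsn.
    unfold hnorm. rewrite sub_sym. apply HK; lia.
  - intros c Hc. apply Rle_trans with d2; [|auto].
    apply (@Napprox X); auto. intros d Hd.
    destruct (arch d Hd) as [K1 HK1].
    destruct (Hl (sqrt d)) as [K2 HK2]. apply sqrt_lt_R0; lra.
    set (n := Nat.max K1 K2).
    exists (x - s n)%H, (s n - l)%H.
    assert (E1 : (x - s n + (s n - l) = x - l)%H) by veq.
    rewrite E1. split; [lra|]. split.
    + destruct (Hsn n) as [_ Hn]. assert (/ INR (S n) < d) by (apply HK1; lia). lra.
    + left. apply sqrt_lt_0_alt. apply HK2. lia.
Qed.

End Exist.

Section Proj.
Context {X : Hilbert}.
Implicit Types x y z : X.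

Lemma orth_add (S : @set X) u w : orth S u -> orth S w -> orth S (u + w)%H.
Proof. intros Hu Hw s Hs. expand. rewrite Hu, Hw; auto. ring. Qed.
Lemma orth_scal (S : @set X) a u : orth S u -> orth S (a *: u)%H.
Proof. intros Hu s Hs. expand. rewrite Hu; auto. ring. Qed.
Lemma orth_opp (S : @set X) u : orth S u -> orth S (- u)%H.
Proof. intros Hu s Hs. expand. rewrite Hu; auto. ring. Qed.
Lemma orth_sub (S : @set X) u w : orth S u -> orth S w -> orth S (u - w)%H.
Proof. intros. apply orth_add; auto. apply orth_opp; auto. Qed.
Lemma orth_0 (S : @set X) : orth S hzero.
Proof. intros s _. apply ip_0l. Qed.
Lemma orth_eq (S : @set X) u w : u = w -> orth S u -> orth S w.
Proof. intros ->; auto. Qed.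

Lemma sqexp (w z : X) (t : R) : << w - t *: z , w - t *: z >> = << w , w >> - 2 * t * << w , z >> + t * t * << z , z >>.
Proof. expand. rewrite (hinner_sym _ z w). ring. Qed.

Lemma nearest_orth (W : @set X) x p : is_affine_subspace W -> W p ->
  (forall c, W c -> << x - p , x - p >> <= << x - c , x - c >>) -> orth (par W) (x - p)%H.
Proof.
  intros [_ Haff] Hp Hmin.
  assert (K : forall c, W c -> << x - p , c - p >> = 0).
  { intros c Hc. apply (quad0 _ (<< c - p , c - p >>)). apply nonneg.
    intro t. specialize (Hmin _ (Haff c p t Hc Hp)).
    assert (E : (x - (t *: c + (1 - t) *: p) = (x - p) - t *: (c - p))%H) by veq.
    rewrite E, sqexp in Hmin. lra. }
  intros s [a [b [Ha [Hb ->]]]].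
  pose proof (K a Ha). pose proof (K b Hb). expand_in H. expand_in H0. expand. lra.
Qed.

Lemma aff_mid (W : @set X) : is_affine_subspace W ->
  forall a b, W a -> W b -> W (/2 *: a + (1 - /2) *: b)%H.
Proof. intros [_ H] a b Ha Hb. apply H; auto. Qed.

Lemma closed_sub (W : @set X) p : is_closed W -> closure W p -> W p.
Proof. intros H; apply H. Qed.

Lemma proj_spec (W : @set X) x : closed_affine_subspace W ->
  W (proj W x) /\ orth (par W) (x - proj W x)%H.
Proof.
  intros [Ha Hc].
  assert (Hex : exists p, W p /\ forall c, W c -> hnorm (x - p) <= hnorm (x - c)).
  { destruct (exist_near W x (proj1 Ha) (aff_mid W Ha)) as [p [Hp Hm]].
    exists p. split. apply Hc; auto. intros c Hc'. apply sqrt_le_1_alt. auto. }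
  pose proof (epsilon_spec (inhabits hzero) _ Hex) as [H1 H2].
  fold (proj W x) in H1, H2. split; auto.
  apply nearest_orth; auto. intros c Hc'. specialize (H2 c Hc').
  apply sqrt_le_0; try apply nonneg. exact H2.
Qed.

Lemma proj_unique (W : @set X) x p : closed_affine_subspace W -> W p ->
  orth (par W) (x - p)%H -> proj W x = p.
Proof.
  intros HW Hp Ho. destruct (proj_spec W x HW) as [Hq Hoq].
  set (q := proj W x) in *.
  assert (H1 : << x - q , p - q >> = 0) by (apply Hoq; exists p, q; auto).
  assert (H2 : << x - p , q - p >> = 0) by (apply Ho; exists q, p; auto).
  apply veq_intro. expand_in H1. expand_in H2. expand. lra.
Qed.

Lemma proj_in (W : @set X) x : closed_affine_subspace W -> W (proj W x).
Proof. intro H; apply (proj_spec W x H). Qed.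
Lemma proj_orth (W : @set X) x : closed_affine_subspace W -> orth (par W) (x - proj W x)%H.
Proof. intro H; apply (proj_spec W x H). Qed.
Lemma proj_id (W : @set X) u : closed_affine_subspace W -> W u -> proj W u = u.
Proof.
  intros H Hu. apply proj_unique; auto.
  apply orth_eq with hzero. symmetry; veq. apply orth_0.
Qed.

Lemma decomp_unique (W : @set X) b1 c1 b2 c2 : par W b1 -> orth (par W) c1 -> par W b2 -> orth (par W) c2 ->
  (b1 + c1 = b2 + c2)%H -> b1 = b2.
Proof.
  intros Hb1 Hc1 Hb2 Hc2 H.
  assert (E : (c2 - c1 = b1 - b2)%H).
  { transitivity ((b2 + c2) - b2 - c1)%H. veq. rewrite <- H. veq. }
  apply veq_intro.
  assert (E2 : << b1 - b2, b1 - b2 >> = << c2 - c1, b1 - b2 >>) by (rewrite E; reflexivity).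
  rewrite E2. expand.
  rewrite (Hc1 b1), (Hc1 b2), (Hc2 b1), (Hc2 b2); auto. ring.
Qed.

Definition D (W : @set X) e := (proj W e - proj W hzero)%H.

Lemma D_par (W : @set X) e : closed_affine_subspace W -> par W (D W e).
Proof. intro H. exists (proj W e), (proj W hzero). repeat split; try apply proj_in; auto. Qed.

Lemma D_orth (W : @set X) e : closed_affine_subspace W -> orth (par W) (e - D W e)%H.
Proof.
  intro H. apply orth_eq with ((e - proj W e) - (hzero - proj W hzero))%H.
  unfold D; veq. apply orth_sub; apply proj_orth; auto.
Qed.

Lemma par0 (W : @set X) : closed_affine_subspace W -> par W hzero.
Proof.
  intro H. exists (proj W hzero), (proj W hzero). split; [apply proj_in; auto|split; [apply proj_in; auto|]].
  symmetry. apply hadd_opp.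
Qed.

Lemma proj_shift (W : @set X) z e : closed_affine_subspace W -> proj W (z + e)%H = (proj W z + D W e)%H.
Proof.
  intro H.
  assert (E : (proj W (z + e) - proj W z)%H = D W e).
  { apply (decomp_unique W _ (e - (proj W (z + e) - proj W z))%H _ (e - D W e)%H).
    - exists (proj W (z + e)), (proj W z). split; [apply proj_in; auto|split; [apply proj_in; auto|reflexivity]].
    - apply orth_eq with (((z + e) - proj W (z + e)) - (z - proj W z))%H. veq.
      apply orth_sub; apply proj_orth; auto.
    - apply D_par; auto.
    - apply D_orth; auto.
    - veq. }
  rewrite <- E. veq.
Qed.

Lemma D_on_par (W : @set X) e : closed_affine_subspace W -> par W e -> D W e = e.
Proof.
  intros H He. apply (decomp_unique W _ (e - D W e)%H _ hzero).
  apply D_par; auto. apply D_orth; auto. auto. apply orth_0. veq.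
Qed.

Lemma D_on_orth (W : @set X) e : closed_affine_subspace W -> orth (par W) e -> D W e = hzero.
Proof.
  intros H He. apply (decomp_unique W _ (e - D W e)%H _ e).
  apply D_par; auto. apply D_orth; auto. apply par0; auto. auto. veq.
Qed.

Lemma D_sym (W : @set X) e f : closed_affine_subspace W -> << D W e , f >> = << e , D W f >>.
Proof.
  intro H.
  pose proof (D_orth W f H (D W e) (D_par W e H)) as H1.
  pose proof (D_orth W e H (D W f) (D_par W f H)) as H2.
  expand_in H1. expand_in H2.
  rewrite (hinner_sym _ (D W f) (D W e)) in H1. rewrite (hinner_sym _ (D W e) f). lra.
Qed.

Lemma proj_orth_shift (W : @set X) z e : closed_affine_subspace W -> orth (par W) e -> proj W (z + e)%H = proj W z.
Proof. intros H He. rewrite proj_shift, D_on_orth; auto. veq. Qed.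

Lemma proj_affine (W : @set X) x y l : closed_affine_subspace W ->
  proj W (l *: x + (1 - l) *: y)%H = (l *: proj W x + (1 - l) *: proj W y)%H.
Proof.
  intro H. apply proj_unique; auto.
  - apply (proj2 (proj1 H)); apply proj_in; auto.
  - apply orth_eq with (l *: (x - proj W x) + (1 - l) *: (y - proj W y))%H. veq.
    apply orth_add; apply orth_scal; apply proj_orth; auto.
Qed.

Lemma normal_orth (W : @set X) y u : is_affine_subspace W -> normal_cone W y u -> orth (par W) u.
Proof.
  intros [_ Haff] [Hy Hn].
  assert (K : forall c, W c -> << u , c >> = << u , y >>).
  { intros c Hc. pose proof (Hn c Hc) as A1.
    pose proof (Hn _ (Haff y c 2 Hy Hc)) as A2. expand_in A1. expand_in A2. lra. }
  intros s [a [b [Ha [Hb ->]]]]. expand. rewrite (K a), (K b); auto. ring.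
Qed.

End Proj.

Section Ops.
Context {X : Hilbert}.
Implicit Types x y z : X.

Lemma normal_from_orth (W : @set X) p u : W p -> orth (par W) u -> normal_cone W p u.
Proof.
  intros Hp Ho. split; auto. intros c Hc. rewrite (Ho (c - p)%H). lra. exists c, p; auto.
Qed.

Lemma resolvent_N (W : @set X) x : closed_affine_subspace W -> resolvent (normal_cone W) x = proj W x.
Proof.
  intro H. unfold resolvent.
  assert (Hex : exists y, normal_cone W y (x - y)%H).
  { exists (proj W x). apply normal_from_orth. apply proj_in; auto. apply proj_orth; auto. }
  pose proof (epsilon_spec (inhabits x) _ Hex) as Hs.
  set (y := epsilon _ _) in *. symmetry. apply proj_unique; auto.
  apply Hs. apply (normal_orth W y); auto. apply H.
Qed.

Lemma resolvent_shift (W : @set X) (v z : X) : closed_affine_subspace W ->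
  resolvent (op_shift_arg (normal_cone W) v) z = (v + proj W (z - v))%H.
Proof.
  intro H. unfold resolvent, op_shift_arg.
  assert (Hex : exists y, normal_cone W (y - v)%H (z - y)%H).
  { exists (v + proj W (z - v))%H.
    assert (E1 : (v + proj W (z - v) - v = proj W (z - v))%H) by veq.
    assert (E2 : (z - (v + proj W (z - v)) = (z - v) - proj W (z - v))%H) by veq.
    rewrite E1, E2. apply normal_from_orth. apply proj_in; auto. apply proj_orth; auto. }
  pose proof (epsilon_spec (inhabits z) _ Hex) as Hs.
  set (y := epsilon _ _) in *.
  assert (Hp : proj W (z - v) = (y - v)%H).
  { apply proj_unique; auto. apply Hs.
    apply orth_eq with (z - y)%H. veq. apply (normal_orth W (y - v)%H); auto. apply H. }
  rewrite Hp. veq.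
Qed.

Lemma translate_closed_affine (W : @set X) v : closed_affine_subspace W -> closed_affine_subspace (translate v W).
Proof.
  intros [[[w Hw] Haff] Hc]. split; [split|].
  - exists (v + w)%H, w; auto.
  - intros x y l [a [Ha ->]] [b [Hb ->]]. exists (l *: a + (1 - l) *: b)%H. split. apply Haff; auto. veq.
  - intros y Hy. exists (y - v)%H. split; [|veq].
    apply Hc. intros eps He. destruct (Hy eps He) as [c [[a [Ha ->]] Hn]]. exists a. split; auto.
    assert (E : (y - v - a = y - (v + a))%H) by veq. rewrite E. auto.
Qed.

Lemma proj_translate (W : @set X) v z : closed_affine_subspace W ->
  proj (translate v W) z = (v + proj W (z - v))%H.
Proof.
  intro H. apply proj_unique. apply translate_closed_affine; auto.
  exists (proj W (z - v)). split; auto. apply proj_in; auto.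
  intros s [a' [b' [[a [Ha ->]] [[b [Hb ->]] ->]]]].
  pose proof (proj_orth W (z - v)%H H (a - b)%H) as K.
  assert (par W (a - b)%H) by (exists a, b; auto). specialize (K H0).
  expand_in K. expand. lra.
Qed.

End Ops.

Section Main.
Context {X : Hilbert} (U V : @set X) (HU : closed_affine_subspace U) (HV : closed_affine_subspace V).

Definition F x := (x - DR U V x)%H.

Lemma T_formula x : DR U V x = (x - proj U x - proj V x + 2 *: proj V (proj U x))%H.
Proof.
  unfold DR.
  assert (E : (2 *: proj U x - x = 2 *: proj U x + (1 - 2) *: x)%H) by veq.
  rewrite E, proj_affine; auto. veq.
Qed.

Lemma T_affine : affine_map (DR U V).
Proof.
  intros x y l. rewrite !T_formula, !proj_affine; auto. veq.
Qed.

Lemma F_formula x : F x = (proj U x + proj V x - 2 *: proj V (proj U x))%H.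
Proof. unfold F. rewrite T_formula. veq. Qed.

Lemma F_affine x y l : F (l *: x + (1 - l) *: y)%H = (l *: F x + (1 - l) *: F y)%H.
Proof. unfold F. rewrite T_affine. veq. Qed.

Lemma closure_incl (C : @set X) c : C c -> closure C c.
Proof.
  intros Hc eps He. exists c. split; auto. unfold hnorm.
  rewrite hadd_opp, ip_0l, sqrt_0. auto.
Qed.

Lemma v_min : forall y, << proj (closure (ran F)) hzero , proj (closure (ran F)) hzero >> <= << F y , F y >>.
Proof.
  set (C := ran F).
  destruct (exist_near C hzero) as [p [Hp Hm]].
  - exists (F hzero). exists hzero. reflexivity.
  - intros a b [x Hx] [y Hy]. exists (/2 *: x + (1 - /2) *: y)%H. rewrite F_affine, Hx, Hy. reflexivity.
  - assert (Hm2 : forall c, closure C c -> << hzero - p , hzero - p >> <= << hzero - c , hzero - c >>).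
    { intros c Hc. apply (@Napprox X). apply nonneg. intros d Hd.
      destruct (Hc (sqrt d)) as [c' [Hc' Hn]]. apply sqrt_lt_R0; lra.
      exists (hzero - c)%H, (c - c')%H.
      assert (E : (hzero - c + (c - c') = hzero - c')%H) by veq.
      rewrite E. split. apply Hm; auto. split. lra.
      left. apply sqrt_lt_0_alt. exact Hn. }
    assert (Hex : exists p, closure C p /\ forall c, closure C c -> hnorm (hzero - p) <= hnorm (hzero - c)).
    { exists p. split; auto. intros c Hc. apply sqrt_le_1_alt. auto. }
    pose proof (epsilon_spec (inhabits hzero) _ Hex) as [_ H2].
    fold (proj (closure C) hzero) in H2.
    intro y. specialize (H2 (F y) (closure_incl C _ (ex_intro _ y eq_refl))).
    apply sqrt_le_0 in H2; try apply nonneg.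
    revert H2. expand. lra.
Qed.

Lemma v_stat x0 : F x0 = proj (closure (ran F)) hzero ->
  forall d, << F x0 , F (x0 + d) - F x0 >> = 0.
Proof.
  intros Hx d. set (w := (F (x0 + d) - F x0)%H).
  apply (quad0 _ (<< w , w >>)). apply nonneg. intro t.
  pose proof (v_min (x0 + (-t) *: d)%H) as H.
  assert (E : F (x0 + (-t) *: d)%H = (F x0 - t *: w)%H).
  { assert (E0 : (x0 + (-t) *: d = (-t) *: (x0 + d) + (1 - (-t)) *: x0)%H) by veq.
    rewrite E0, F_affine. unfold w. veq. }
  rewrite E, sqexp, <- Hx in H. lra.
Qed.

Lemma v_perp x0 : F x0 = proj (closure (ran F)) hzero ->
  orth (par U) (F x0) /\ orth (par V) (F x0).
Proof.
  intro Hx. set (v := F x0).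
  pose proof (v_stat x0 Hx) as Hs. fold v in Hs.
  assert (HA : forall a, par U a -> << v , a - D V a >> = 0).
  { intros a Ha. rewrite <- (Hs a). f_equal.
    unfold v. rewrite !F_formula.
    rewrite (proj_shift U x0 a), (D_on_par U a), (proj_shift V x0 a), (proj_shift V (proj U x0) a); auto. veq. }
  assert (HB : forall c, orth (par U) c -> << v , D V c >> = 0).
  { intros c Hc. rewrite <- (Hs c). f_equal.
    unfold v. rewrite !F_formula.
    rewrite (proj_orth_shift U x0 c), (proj_shift V x0 c); auto. veq. }
  set (b := D V v).
  assert (cU : orth (par U) (v - b)%H).
  { intros a Ha. pose proof (HA a Ha) as K. expand_in K. expand.
    unfold b. rewrite D_sym by auto; lra. }
  assert (hB : forall c, orth (par U) c -> << b , c >> = 0).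
  { intros c Hc. unfold b. rewrite D_sym; auto. }
  assert (bU : b = D U b).
  { apply veq_intro.
    pose proof (hB _ (D_orth U b HU)) as K1.
    pose proof (D_orth U b HU (D U b) (D_par U b HU)) as K2.
    expand_in K1. expand_in K2. expand.
    rewrite (hinner_sym _ (D U b) b). lra. }
  assert (bparU : par U b) by (rewrite bU; apply D_par; auto).
  assert (bparV : par V b) by (apply D_par; auto).
  assert (vb : << v , b >> = 0).
  { assert (E3 : proj V x0 = (proj V (proj U x0) + D V (x0 - proj U x0))%H).
    { rewrite <- proj_shift; auto. f_equal. veq. }
    pose proof (proj_orth V (proj U x0) HV b bparV) as f1.
    assert (f2 : << D V (x0 - proj U x0) , b >> = 0).
    { rewrite D_sym, D_on_par; auto. apply proj_orth; auto. }
    unfold v. rewrite F_formula, E3. expand_in f1. expand. lra. }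
  assert (b0 : b = hzero).
  { apply hinner_def. pose proof (D_orth V v HV b bparV) as K. fold b in K.
    expand_in K. lra. }
  split.
  - apply orth_eq with (v - b)%H. rewrite b0. veq. auto.
  - apply orth_eq with (v - D V v)%H. fold b. rewrite b0. veq. apply D_orth; auto.
Qed.

End Main.

Section Final.
Context {X : Hilbert} (U V : @set X) (HU : closed_affine_subspace U) (HV : closed_affine_subspace V)
  (v : X) (HvU : orth (par U) v) (HvV : orth (par V) v).

Lemma Zv_eq : set_eq (Zv U V v) (inter U (translate v V)).
Proof.
  intro x. unfold Zv, zeros, op_add, op_translate, op_shift_arg. split.
  - intros (a & b & (a' & Ha' & ->) & Hb & _). split. apply Ha'.
    exists (x - v)%H. split. apply Hb. veq.
  - intros [Hx [w [Hw ->]]]. exists (- v + v)%H, hzero. split; [|split].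
    + exists v. split; auto. apply normal_from_orth; auto.
    + assert (E : (v + w - v = w)%H) by veq. rewrite E.
      apply normal_from_orth; auto. apply orth_0.
    + veq.
Qed.

Lemma Kv_eq : (exists z0, U z0 /\ translate v V z0) ->
  set_eq (Kv U V v) (inter (orth (par U)) (orth (par V))).
Proof.
  intros [z0 [Hz0 [w0 [Hw0 Ez]]]] x.
  unfold Kv, zeros, op_add, op_inv, op_translate, op_vee, op_shift_arg. split.
  - intros (a & b & (a' & Ha' & Ex) & Hb & _). split.
    + apply orth_eq with (- v + a')%H. auto. apply orth_add. apply orth_opp; auto.
      apply (normal_orth U a); auto. apply HU.
    + apply orth_eq with (- - x)%H. veq. apply orth_opp.
      apply (normal_orth V (- b - v)%H); auto. apply HV.
  - intros [Hx1 Hx2]. exists z0, (- z0)%H. split; [|split].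
    + exists (x + v)%H. split. apply normal_from_orth; auto. apply orth_add; auto. veq.
    + assert (E : (- - z0 - v = w0)%H) by (rewrite Ez; veq). rewrite E.
      apply normal_from_orth; auto. apply orth_opp; auto.
    + symmetry. apply hadd_opp.
Qed.

Lemma Fix_eq : set_eq (Fix (fun x => v + DR U V x)%H)
  (msum (inter U (translate v V)) (inter (orth (par U)) (orth (par V)))).
Proof.
  intro x. unfold Fix. split.
  - intro Hfx.
    assert (HF : F U V x = v). { unfold F. rewrite <- Hfx at 1. veq. }
    set (p := proj U x). set (q := proj V p). set (k := (x - p)%H).
    assert (E1 : proj V x = (q + D V k)%H).
    { unfold q, k. rewrite <- proj_shift; auto. f_equal. veq. }
    assert (Hv' : v = (p - q + D V k)%H).
    { rewrite <- HF, F_formula, E1; auto. fold p q. veq. }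
    assert (Dk : D V k = hzero).
    { apply (decomp_unique V _ (p - q)%H _ v). apply D_par; auto. apply proj_orth; auto.
      apply par0; auto. auto. rewrite Hv'. veq. }
    exists p, k. split; [split|split; [split|]].
    + apply proj_in; auto.
    + exists q. split. apply proj_in; auto. rewrite Hv', Dk. veq.
    + apply proj_orth; auto.
    + apply orth_eq with (k - D V k)%H. rewrite Dk; veq. apply D_orth; auto.
    + unfold k. veq.
  - intros (z & k & [Hz [w [Hw Ez]]] & [Hk1 Hk2] & ->).
    assert (HF : F U V (z + k)%H = v).
    { rewrite F_formula; auto.
      rewrite (proj_orth_shift U z k), (proj_orth_shift V z k), (proj_id U z); auto.
      rewrite Ez, (hadd_comm _ v w), (proj_orth_shift V w v), (proj_id V w); auto. veq. }
    unfold F in HF. rewrite <- HF. veq.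
Qed.

End Final.

Local Open Scope hilbert_scope.

Theorem proposition4p3 (X : Hilbert) (U V : @set X) :
  closed_affine_subspace U -> closed_affine_subspace V ->
  let T := DR U V in
  let v := proj (closure (ran (fun x => x - T x))) 0 in
  ran (fun x => x - T x) v ->
  (* (i) *)
  (affine_map T /\
   fun_eq T (fun x => x - proj U x - proj V x + 2%R *: proj V (proj U x))) /\
  (* (ii) *)
  inter (orth (par U)) (orth (par V)) v /\
  (* (iii) *)
  (forall (x : X) (a : R), proj U x = proj U (x + a *: v)) /\
  (* (iv) *)
  (forall (x : X) (a : R), proj V x = proj V (x + a *: v)) /\
  (* (v) *)
  (fun_eq (fun x => T (x + v)) (fun x => v + T x) /\
   fun_eq (fun x => v + T x)
          (DR_op (normal_cone U) (op_shift_arg (normal_cone V) v)) /\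
   fun_eq (DR_op (normal_cone U) (op_shift_arg (normal_cone V) v))
          (DR U (translate v V))) /\
  (* (vi) *)
  set_eq (Zv U V v) (inter U (translate v V)) /\
  (* (vii) *)
  set_eq (Kv U V v) (inter (orth (par U)) (orth (par V))) /\
  (* (viii) *)
  (set_eq (Fix (fun x => T (x + v))) (Fix (fun x => v + T x)) /\
   set_eq (Fix (fun x => v + T x)) (msum (Zv U V v) (Kv U V v)) /\
   set_eq (msum (Zv U V v) (Kv U V v))
          (msum (inter U (translate v V)) (inter (orth (par U)) (orth (par V))))).
Proof.
  intros HU HV T v Hv.
  destruct Hv as [x0 Hx0].
  assert (Hx : F U V x0 = v) by exact Hx0.
  assert (Hperp : orth (par U) v /\ orth (par V) v).
  { rewrite <- Hx. apply (v_perp U V HU HV x0). rewrite Hx. reflexivity. }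
  destruct Hperp as [HvU HvV].
  assert (Hne : exists z0, U z0 /\ translate v V z0).
  { exists (proj U x0). split. apply proj_in; auto.
    exists (proj V (2 *: proj U x0 - x0)). split. apply proj_in; auto.
    rewrite <- Hx. unfold F, DR. veq. }
  assert (Tv : forall x, T (x + v) = v + T x).
  { intro x. unfold T. rewrite !(T_formula U V HV).
    rewrite (proj_orth_shift U x v), (proj_orth_shift V x v); auto. veq. }
  assert (TD : forall x, v + T x = DR_op (normal_cone U) (op_shift_arg (normal_cone V) v) x).
  { intro x. unfold DR_op. rewrite resolvent_N, resolvent_shift; auto.
    rewrite (proj_orth_shift V _ (- v)); auto. 2: apply orth_opp; auto.
    unfold T, DR. veq. }
  assert (DD : forall x, DR_op (normal_cone U) (op_shift_arg (normal_cone V) v) x = DR U (translate v V) x).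
  { intro x. unfold DR_op, DR. rewrite resolvent_N, resolvent_shift, proj_translate; auto. }
  assert (HZ : set_eq (Zv U V v) (inter U (translate v V))) by (apply Zv_eq; auto).
  assert (HK : set_eq (Kv U V v) (inter (orth (par U)) (orth (par V)))) by (apply Kv_eq; auto).
  assert (HFix : set_eq (Fix (fun x => v + DR U V x)) (msum (inter U (translate v V)) (inter (orth (par U)) (orth (par V))))) by (apply Fix_eq; auto).
  split; [split|split; [split; auto|split; [|split; [|split; [split; [|split]|split; [auto|split; [auto|split; [|split]]]]]]]].
  - apply T_affine; auto.
  - intro x. apply T_formula; auto.
  - intros x a. symmetry. apply proj_orth_shift; auto. apply orth_scal; auto.
  - intros x a. symmetry. apply proj_orth_shift; auto. apply orth_scal; auto.
  - intro x. apply Tv.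
  - intro x. apply TD.
  - intro x. apply DD.
  - intro x. unfold Fix. rewrite Tv. tauto.
  - intro x. split.
    + intro H. apply HFix in H. destruct H as (z & k & Hz & Hk & ->). exists z, k.
      split; [apply HZ; auto|split; [apply HK; auto|reflexivity]].
    + intros (z & k & Hz & Hk & ->). apply HFix. exists z, k.
      split; [apply HZ; auto|split; [apply HK; auto|reflexivity]].
  - intro x. split.
    + intros (z & k & Hz & Hk & ->). exists z, k.
      split; [apply HZ; auto|split; [apply HK; auto|reflexivity]].
    + intros (z & k & Hz & Hk & ->). exists z, k.
      split; [apply HZ; auto|split; [apply HK; auto|reflexivity]].
Qed.
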